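(* Consider the input-delay system $\dot x(t)=f(x(t))+g(x(t))u(t-\tau)$, $\tau>0$, operating in an environment whose state satisfies $e(t+\vartheta)=\Gamma(\vartheta,e(t))$ and $\dot e(t+\vartheta)=\dot\Gamma(\vartheta,e(t),\dot e(t))$ for $\vartheta\in[0,\tau]$. Let $H:X\times E\to\mathbb{R}$ be continuously differentiable, $S_{\rm e}=\{(x,e)\in X\times E:H(x,e)\ge0\}$, and suppose $H$ is an ECBF for the delay system with extended class $\mathcal{K}$ function $\alpha$. Suppose Assumption 2 holds: the initial input history $u_0$ satisfies $(\Psi(\vartheta,x_0,u_0),\Gamma(\vartheta,e_0))\in S_{\rm e}$ for all $\vartheta\in[0,\tau]$. Then any locally Lipschitz continuous controller $u=K(x_{\rm p},e_{\rm p},\dot e_{\rm p})$ with $x_{\rm p}=\Psi(\tau,x,u_t)$, $e_{\rm p}=\Gamma(\tau,e)$, $\dot e_{\rm p}=\dot\Gamma(\tau,e,\dot e)$, satisfying $$\dot H(x_{\rm p},e_{\rm p},\dot e_{\rm p},u)\ge-\alpha(H(x_{\rm p},e_{\rm p}))$$ for all $(x,e)\in S_{\rm e}$, $\dot e\in\mathcal{E}$ and $u_t\in\mathcal{B}$, renders $S_{\rm e}$ forward invariant: $(x_0,e_0)\in S_{\rm e}\Rightarrow(x(t),e(t))\in S_{\rm e}$ for all $t\ge0$.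
   Context: $X\subseteq\mathbb{R}^n$ open connected, $U\subseteq\mathbb{R}^m$, $f,g$ locally Lipschitz, $u$ bounded and continuous a.e., solutions exist uniquely for $t\ge0$. Environment state $e(t)\in E\subseteq\mathbb{R}^l$, continuously differentiable, $\dot e(t)\in\mathcal{E}\subseteq\mathbb{R}^l$, $e(0)=e_0$; $\Gamma:[0,\tau]\times E\to E$, $\dot\Gamma:[0,\tau]\times E\times\mathcal{E}\to\mathcal{E}$ are the maps describing its future. $\mathcal{B}$: functions $[-\tau,0)\to U$ bounded and continuous a.e.; $u_t(\theta)=u(t+\theta)$, $\theta\in[-\tau,0)$. Semi-flow $\Psi(\vartheta,x,u_t)=x+\int_0^\vartheta\big(f(\Psi(\varphi,x,u_t))+g(\Psi(\varphi,x,u_t))u_t(\varphi-\tau)\big)d\varphi$, $\vartheta\in[0,\tau]$. $\dot H(x,e,\dot e,u)=\nabla_xH(x,e)(f(x)+g(x)u)+\nabla_eH(x,e)\dot e$. Extended class $\mathcal{K}$ function: continuous strictly increasing $\alpha:(-a,b)\to\mathbb{R}$, $a,b>0$, $\alpha(0)=0$. Definition: $H$ is an ECBF for the delay system with $\tau>0$ if there is an extended class $\mathcal{K}$ function $\alpha$ such that for all $(x,e)\in S_{\rm e}$, $\dot e\in\mathcal{E}$, $u_t\in\mathcal{B}$: $\sup_{u\in U}\dot H(x_{\rm p},e_{\rm p},\dot e_{\rm p},u)\ge-\alpha(H(x_{\rm p},e_{\rm p}))$ with $x_{\rm p}=\Psi(\tau,x,u_t)$, $e_{\rm p}=\Gamma(\tau,e)$,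 $\dot e_{\rm p}=\dot\Gamma(\tau,e,\dot e)$. *)

(* Defs.v *)
From HB Require Import structures.
From Stdlib Require Import Reals.
From mathcomp Require Import all_boot all_order all_algebra.
From mathcomp Require Import all_classical all_reals all_analysis.
From mathcomp Require Import Rstruct Rstruct_topology.
Set Implicit Arguments. Unset Strict Implicit. Unset Printing Implicit Defensive.
Import Order.TTheory GRing.Theory Num.Theory.
Import numFieldNormedType.Exports.
Local Open Scope classical_set_scope.
Local Open Scope ring_scope.

Definition RInt_vec (k : nat) (F : R -> 'cV[R]_k) (a b : R) (v : 'cV[R]_k) : Prop :=
  forall i : 'I_k, exists pr : Riemann_integrable (fun s => F s i ord0) a b,
    RiemannInt pr = v i ord0.

Definition ushift (m : nat) (u : R -> 'cV[R]_m) (t : R) : R -> 'cV[R]_m :=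
  fun theta => u (t + theta).

Definition inB (m : nat) (tau : R) (U : set 'cV[R]_m) (w : R -> 'cV[R]_m) : Prop :=
  (forall theta, - tau <= theta < 0 -> U (w theta)) /\
  (exists M : R, forall theta, - tau <= theta < 0 -> `|w theta| <= M) /\
  (@lebesgue_measure R).-negligible
     [set theta : R | - tau <= theta < 0 /\ ~ {for theta, continuous w}].

Definition rhs (n m : nat) (f : 'cV[R]_n -> 'cV[R]_n) (g : 'cV[R]_n -> 'M[R]_(n, m))
  (y : 'cV[R]_n) (v : 'cV[R]_m) : 'cV[R]_n := f y + g y *m v.

Definition pred_sol (n m : nat) (f : 'cV[R]_n -> 'cV[R]_n) (g : 'cV[R]_n -> 'M[R]_(n, m))
  (tau : R) (x : 'cV[R]_n) (w : R -> 'cV[R]_m) (y : R -> 'cV[R]_n) : Prop :=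
  forall th, 0 <= th <= tau ->
    RInt_vec (fun p => rhs f g (y p) (w (p - tau))) 0 th (y th - x).

Definition loc_lipschitz (V W : normedModType R) (A : set V) (h : V -> W) : Prop :=
  forall x, A x -> exists r : R, 0 < r /\ exists L : R,
    forall y z, A y -> A z -> `|y - x| < r -> `|z - x| < r ->
      `|h y - h z| <= L * `|y - z|.

(* Extended class K function alpha : (-a,b) -> R (given as a total function
   on R; only its values on (-a,b) are constrained). *)
Definition ext_classK (alpha : R -> R) : Prop :=
  exists a b : R, 0 < a /\ 0 < b /\ alpha 0 = 0 /\
    (forall x, - a < x < b -> {for x, continuous alpha}) /\
    (forall x y, - a < x < b -> - a < y < b -> x < y -> alpha x < alpha y).

Definition C1_on (n l : nat) (X : set 'cV[R]_n) (E : set 'cV[R]_l)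
  (H : 'cV[R]_n -> 'cV[R]_l -> R) : Prop :=
  exists O : set ('cV[R]_n * 'cV[R]_l), open O /\
    (forall x e, X x -> E e -> O (x, e)) /\
    (forall p, O p -> differentiable (fun q : 'cV[R]_n * 'cV[R]_l => (H q.1 q.2 : R^o)) p) /\
    (forall v p, O p -> {for p, continuous (fun q => 'd (fun q : 'cV[R]_n * 'cV[R]_l => (H q.1 q.2 : R^o)) q v)}).

Definition Hdot (n m l : nat) (f : 'cV[R]_n -> 'cV[R]_n) (g : 'cV[R]_n -> 'M[R]_(n, m))
  (H : 'cV[R]_n -> 'cV[R]_l -> R) (x : 'cV[R]_n) (e ed : 'cV[R]_l) (u : 'cV[R]_m) : R :=
  'd (fun y => (H y e : R^o)) x (rhs f g x u) + 'd (fun z => (H x z : R^o)) e ed.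

Definition Se (n l : nat) (X : set 'cV[R]_n) (E : set 'cV[R]_l)
  (H : 'cV[R]_n -> 'cV[R]_l -> R) (x : 'cV[R]_n) (e : 'cV[R]_l) : Prop :=
  X x /\ E e /\ 0 <= H x e.

Definition ECBF (n m l : nat) (X : set 'cV[R]_n) (U : set 'cV[R]_m)
  (E Ecal : set 'cV[R]_l) (f : 'cV[R]_n -> 'cV[R]_n) (g : 'cV[R]_n -> 'M[R]_(n, m))
  (tau : R) (Psi : R -> 'cV[R]_n -> (R -> 'cV[R]_m) -> 'cV[R]_n)
  (Gam : R -> 'cV[R]_l -> 'cV[R]_l) (dGam : R -> 'cV[R]_l -> 'cV[R]_l -> 'cV[R]_l)
  (H : 'cV[R]_n -> 'cV[R]_l -> R) (alpha : R -> R) : Prop :=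
  ext_classK alpha /\
  forall x e ed w, Se X E H x e -> Ecal ed -> inB tau U w ->
    let xp := Psi tau x w in let ep := Gam tau e in let edp := dGam tau e ed in
    ((- alpha (H xp ep))%:E <= ereal_sup [set (Hdot f g H xp ep edp u)%:E | u in U])%E.

(* Main.v *)
Require Import Defs.
From HB Require Import structures.
From Stdlib Require Import Reals.
From mathcomp Require Import all_boot all_order all_algebra.
From mathcomp Require Import all_classical all_reals all_analysis.
From mathcomp Require Import Rstruct Rstruct_topology.
Import Order.TTheory GRing.Theory Num.Theory.
Import numFieldNormedType.Exports.
Local Open Scope classical_set_scope.
Local Open Scope ring_scope.

From Stdlib Require Lra.
From Coquelicot Require Coquelicot.

Module SL.
Import Stdlib.micromega.Lra.
Import Coquelicot.Coquelicot.
Local Open Scope R_scope.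

Lemma sl_shift (F : R -> R) (t th : R) (pr1 : Riemann_integrable F 0 (t+th))
  (pr2 : Riemann_integrable F 0 t) : 0 <= t -> 0 <= th ->
  exists pr : Riemann_integrable (fun p => F (t+p)) 0 th,
    RiemannInt pr = RiemannInt pr1 - RiemannInt pr2.
Proof.
intros Ht Hth.
assert (E1 := ex_RInt_Reals_1 _ _ _ pr1).
assert (E2 : ex_RInt F t (t+th)) by (apply (ex_RInt_Chasles_2 F 0); [lra|exact E1]).
assert (E3 : ex_RInt F (1*0+t) (1*th+t)).
{ replace (1*0+t) with t by ring. replace (1*th+t) with (t+th) by ring. exact E2. }
assert (E4 := ex_RInt_comp_lin F 1 t 0 th E3).
assert (E5 : ex_RInt (fun p => F (t+p)) 0 th).
{ eapply ex_RInt_ext; [|exact E4]. intros p _. unfold scal; simpl; unfold mult; simpl.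
  rewrite Rmult_1_l. f_equal. ring. }
exists (ex_RInt_Reals_0 _ _ _ E5).
rewrite -!RInt_Reals.
assert (C := RInt_Chasles F 0 t (t+th) (ex_RInt_Reals_1 _ _ _ pr2) E2).
change (RInt F 0 t + RInt F t (t+th) = RInt F 0 (t+th)) in C.
assert (L := RInt_comp_lin F 1 t 0 th E3).
replace (1*0+t) with t in L by ring. replace (1*th+t) with (t+th) in L by ring.
rewrite -C -L.
set (A := RInt F 0 t). set (B := RInt (fun y : R => scal 1 (F (1 * y + t))) 0 th).
change (RInt (fun p : R => F (t + p)) 0 th = A + B - A).
assert (HB : forall a b : R, a + b - a = b) by (intros; ring).
rewrite HB. unfold B.
apply RInt_ext. intros p _. unfold scal; simpl; unfold mult; simpl.
  rewrite Rmult_1_l. f_equal. ring.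
Qed.

Lemma sl_bound1 (F : R -> R) (a b c M : R) : a <= b -> ex_RInt F a b ->
  (forall t, a <= t <= b -> Rabs (F t - c) <= M) ->
  Rabs (RInt F a b - (b - a) * c) <= (b - a) * M.
Proof.
intros Hab E HM.
assert (Ec : ex_RInt (fun _ => c) a b) by apply ex_RInt_const.
assert (Em := ex_RInt_minus _ _ a b E Ec).
assert (Hm := RInt_minus _ _ a b E Ec).
rewrite RInt_const in Hm.
assert (Hx : RInt F a b - (b - a) * c = RInt (fun x => minus (F x) c) a b).
{ cbv beta in Hm. etransitivity; [|symmetry; exact Hm]. reflexivity. }
rewrite Hx. apply abs_RInt_le_const; auto.
Qed.

Lemma sl_bound (F : R -> R) (s r c M : R) : 0 <= s -> 0 <= r ->
  (forall q, 0 <= q -> ex_RInt F 0 q) ->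
  (forall t, Rmin s r <= t <= Rmax s r -> Rabs (F t - c) <= M) ->
  Rabs (RInt F 0 r - RInt F 0 s - (r - s) * c) <= Rabs (r - s) * M.
Proof.
intros Hs Hr E HM.
destruct (Rle_dec s r) as [Hsr|Hsr].
- assert (Es : ex_RInt F s r) by (apply (ex_RInt_Chasles_2 F 0); [lra|apply E; lra]).
  assert (C := RInt_Chasles F 0 s r (E s Hs) Es).
  change (RInt F 0 s + RInt F s r = RInt F 0 r) in C.
  rewrite -C. rewrite (Rabs_right (r - s)); [|lra].
  replace (RInt F 0 s + RInt F s r - RInt F 0 s - (r - s) * c)
    with (RInt F s r - (r - s) * c) by ring.
  apply sl_bound1; auto. intros t Ht. apply HM.
  rewrite Rmin_left; [rewrite Rmax_right; lra|lra].
- assert (Es : ex_RInt F r s) by (apply (ex_RInt_Chasles_2 F 0); [lra|apply E; lra]).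
  assert (C := RInt_Chasles F 0 r s (E r Hr) Es).
  change (RInt F 0 r + RInt F r s = RInt F 0 s) in C.
  rewrite -C. rewrite (Rabs_left (r - s)); [|lra].
  replace (RInt F 0 r - (RInt F 0 r + RInt F r s) - (r - s) * c)
    with (- (RInt F r s - (s - r) * c)) by ring.
  rewrite Rabs_Ropp. replace (- (r - s) * M) with ((s - r) * M) by ring.
  apply sl_bound1; auto; try lra. intros t Ht. apply HM.
  rewrite Rmin_right; [rewrite Rmax_left; lra|lra].
Qed.

Lemma sl_exR (F G : R -> R) :
  (forall r, 0 <= r -> exists pr : Riemann_integrable F 0 r, RiemannInt pr = G r - G 0) ->
  (forall q, 0 <= q -> ex_RInt F 0 q) /\ (forall q, 0 <= q -> G q - G 0 = RInt F 0 q).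
Proof.
intros HG; split; intros q Hq; destruct (HG q Hq) as [pr Hpr].
- exact (ex_RInt_Reals_1 _ _ _ pr).
- rewrite -Hpr. symmetry. apply RInt_Reals.
Qed.

Lemma sl_cont (F G : R -> R) s : 0 < s ->
  (forall r, 0 <= r -> exists pr : Riemann_integrable F 0 r, RiemannInt pr = G r - G 0) ->
  forall eps, 0 < eps -> exists d, 0 < d /\ forall r, Rabs (r - s) < d -> Rabs (G r - G s) < eps.
Proof.
intros Hs HG eps Heps.
destruct (sl_exR F G HG) as [E V].
destruct (ex_RInt_ub F 0 (s+1) (E (s+1) ltac:(lra))) as [M HM].
set (M' := Rabs M).
exists (Rmin (Rmin s 1) (eps / (M' + 1))).
assert (HM' : 0 <= M') by apply Rabs_pos.
split.
- apply Rmin_pos; [apply Rmin_pos; lra|]. apply Rdiv_lt_0_compat; lra.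
- intros r Hr.
  assert (Hr1 : Rabs (r - s) < Rmin s 1) by (eapply Rlt_le_trans; [exact Hr|apply Rmin_l]).
  assert (Hr2 : Rabs (r - s) < eps / (M'+1)) by (eapply Rlt_le_trans; [exact Hr|apply Rmin_r]).
  assert (Hm1 : Rmin s 1 <= s) by apply Rmin_l. assert (Hm2 : Rmin s 1 <= 1) by apply Rmin_r.
  assert (Hrs := Rabs_def2 _ _ Hr1).
  assert (B := sl_bound F s r 0 M' ltac:(lra) ltac:(lra) E).
  assert (G r - G s = RInt F 0 r - RInt F 0 s - (r - s) * 0) as ->.
  { rewrite -(V r); [|lra]. rewrite -(V s); [|lra]. ring. }
  eapply Rle_lt_trans; [apply B|].
  + intros t Ht. rewrite Rminus_0_r. eapply Rle_trans; [|apply Rle_abs].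
    apply HM. rewrite Rmin_left; [|lra]. rewrite Rmax_right; [|lra].
    assert (Rmin s r <= t <= Rmax s r) by exact Ht.
    split; [eapply Rle_trans; [|apply H]; apply Rmin_glb; lra
           |eapply Rle_trans; [apply H|]; apply Rmax_lub; lra].
  + apply Rle_lt_trans with (eps / (M'+1) * M').
    * apply Rmult_le_compat_r; lra.
    * unfold Rdiv. rewrite Rmult_assoc. rewrite -[X in _ < X](Rmult_1_r eps).
      apply Rmult_lt_compat_l; [lra|]. apply (Rmult_lt_reg_l (M'+1)); [lra|].
      rewrite -Rmult_assoc Rinv_r; [lra|lra].
Qed.

Lemma sl_deriv (F G : R -> R) s : 0 < s ->
  (forall r, 0 <= r -> exists pr : Riemann_integrable F 0 r, RiemannInt pr = G r - G 0) ->
  (forall eps, 0 < eps -> exists d, 0 < d /\ forall r, Rabs (r - s) < d -> Rabs (F r - F s) < eps) ->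
  derivable_pt_lim G s (F s).
Proof.
intros Hs HG HF eps Heps.
destruct (sl_exR F G HG) as [E V].
destruct (HF (eps/2) ltac:(lra)) as [d [Hd Hd2]].
assert (Hdel : 0 < Rmin d s) by (apply Rmin_pos; lra).
exists (mkposreal _ Hdel). intros h Hh0 Hh. simpl in Hh.
assert (Hh1 : Rabs h < d) by (eapply Rlt_le_trans; [exact Hh|apply Rmin_l]).
assert (Hh2 : Rabs h < s) by (eapply Rlt_le_trans; [exact Hh|apply Rmin_r]).
assert (Hhs := Rabs_def2 _ _ Hh2).
assert (B := sl_bound F s (s+h) (F s) (eps/2) ltac:(lra) ltac:(lra) E).
assert (Hab : 0 < Rabs h) by (apply Rabs_pos_lt; exact Hh0).
assert (EQ : (G (s + h) - G s) / h - F s = (RInt F 0 (s+h) - RInt F 0 s - (s + h - s) * F s) / h).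
{ rewrite -(V (s+h)); [|lra]. rewrite -(V s); [|lra]. field. exact Hh0. }
rewrite EQ. unfold Rdiv. rewrite Rabs_mult Rabs_inv.
apply Rle_lt_trans with (Rabs (s + h - s) * (eps/2) * / Rabs h).
- apply Rmult_le_compat_r; [left; apply Rinv_0_lt_compat; exact Hab|].
  apply B. intros t Ht. left. apply Hd2.
  destruct (Rle_dec 0 h).
  + rewrite Rmin_left in Ht; [|lra]. rewrite Rmax_right in Ht; [|lra]. rewrite Rabs_right; [|lra].
    rewrite Rabs_right in Hh1; [|lra]. lra.
  + rewrite Rmin_right in Ht; [|lra]. rewrite Rmax_left in Ht; [|lra]. rewrite Rabs_left in Hh1; [|lra].
    apply Rabs_def1; lra.
- replace (s + h - s) with h by ring. rewrite Rmult_comm -Rmult_assoc Rinv_l; [lra|lra].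
Qed.

End SL.
Import SL.
From mathcomp Require Import ring lra.


Lemma mx_entry_le (a b : nat) (M : 'M[R]_(a,b)) i j : `|M i j| <= `|M|.
Proof.
rewrite [X in _ <= X]mx_normrE.
by apply: (le_bigmax _ _ (i, j)).
Qed.

Lemma mx_norm_lt (a b : nat) (M : 'M[R]_(a,b)) (eps : R) : 0 < eps ->
  (forall i j, `|M i j| < eps) -> `|M| < eps.
Proof.
move=> he H; rewrite [X in X < _]mx_normrE.
apply/bigmax_ltP; split => // -[i j] _; exact: H.
Qed.

Lemma cont_eps (V : normedModType R) (phi : R -> V) (s : R) :
  {for s, continuous phi} -> forall eps : R, 0 < eps ->
  exists2 d : R, 0 < d & forall r, `|r - s| < d -> `|phi r - phi s| < eps.
Proof.
move=> /cvgrPdist_lt H eps he; have := H eps he.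
move=> /nbhs_ballP [d /= d0 Hd]; exists d => // r hr.
rewrite distrC; apply: Hd; rewrite /ball /= distrC; exact: hr.
Qed.

Lemma eps_cont (V : normedModType R) (phi : R -> V) (s : R) :
  (forall eps : R, 0 < eps ->
  exists2 d : R, 0 < d & forall r, `|r - s| < d -> `|phi r - phi s| < eps) ->
  {for s, continuous phi}.
Proof.
move=> H; apply/cvgrPdist_lt => eps he; have [d d0 Hd] := H eps he.
apply/nbhs_ballP; exists d => // r /=; rewrite /ball /= distrC => hr.
rewrite distrC; exact: Hd.
Qed.

Lemma mx_cont_of (k : nat) (phi : R -> 'cV[R]_k) (s : R) :
  (forall i, forall eps : R, 0 < eps ->
    exists2 d : R, 0 < d & forall r, `|r - s| < d -> `|phi r i ord0 - phi s i ord0| < eps) ->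
  {for s, continuous phi}.
Proof.
move=> H; apply: eps_cont => eps he.
have : forall i : 'I_k, exists d : R, 0 < d /\ forall r, `|r - s| < d -> `|phi r i ord0 - phi s i ord0| < eps.
  by move=> i; have [d d0 Hd] := H i eps he; exists d.
move=> /choice [D HD].
exists (\big[Order.min/1]_i D i).
  apply/bigmin_gtP; split => // i _; by case: (HD i).
move=> r hr; apply: mx_norm_lt => // i j.
rewrite (ord1 j) !mxE; apply: (proj2 (HD i)).
apply: (lt_le_trans hr); exact: bigmin_le.
Qed.

Lemma mx_entry_cont (a b : nat) (phi : R -> 'M[R]_(a,b)) (s : R) i j :
  {for s, continuous phi} -> {for s, continuous (fun r => (phi r i j : R^o))}.
Proof.
move=> H; apply: eps_cont => eps he; have [d d0 Hd] := @cont_eps _ _ _ H _ he.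
exists d => // r hr; apply: le_lt_trans (Hd r hr).
have := @mx_entry_le _ _ (phi r - phi s) i j; by rewrite !mxE.
Qed.

Lemma mx_deriv_of (k : nat) (phi : R -> 'cV[R]_k) (s : R) (d : 'cV[R]_k) :
  (forall i, derivable_pt_lim (fun r => phi r i ord0) s (d i ord0)) -> is_derive (s : R^o) 1 phi d.
Proof.
move=> H.
have cv : (fun h : R^o => h^-1 *: (phi (h *: (1:R^o) + (s:R^o)) - phi s)) @ 0^' --> d.
  apply/cvgrPdist_lt => eps he.
  have : forall i : 'I_k, exists D : R, 0 < D /\ forall h : R, h <> 0 -> `|h| < D ->
      `|(phi (s + h) i ord0 - phi s i ord0) / h - d i ord0| < eps.
    move=> i; have [D HD] := H i eps ltac:(by apply/RltP); exists (pos D); split.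
      by apply/RltP; case: D {HD}.
    move=> h h0 /RltP hD; apply/RltP; exact: HD.
  move=> /choice [D HD].
  rewrite /within /=; apply/nbhs_ballP; exists (\big[Order.min/1]_i D i).
    apply/bigmin_gtP; split => // i _; by case: (HD i).
  move=> h /=; rewrite /ball /= sub0r normrN => hD /eqP h0.
  rewrite distrC; apply: mx_norm_lt => // i j; rewrite (ord1 j) !mxE.
  have -> : (h%:A : R^o) = h by exact: mulr1.
  rewrite (addrC h) mulrC; apply: (proj2 (HD i)) => //.
  apply: (lt_le_trans hD); exact: bigmin_le.
apply: DeriveDef; first by apply/cvg_ex; exists d.
exact: cvg_lim.
Qed.

Lemma cont_sum (k : nat) (F : 'I_k -> R -> R^o) (s : R) :
  (forall j, {for s, continuous (F j)}) -> {for s, continuous (fun r => \sum_j F j r)}.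
Proof.
move=> H.
suff: forall (l : seq 'I_k), {for s, continuous (fun r => \sum_(j <- l) F j r)}.
  by move=> /(_ (index_enum _)).
elim=> [|j l IH]; rewrite /prop_for /continuous_at.
  under eq_fun do rewrite big_nil. rewrite big_nil. exact: cvg_cst.
under eq_fun do rewrite big_cons. rewrite big_cons. exact: (continuousD (H j) IH).
Qed.

Lemma chainH (n l : nat) (H : 'cV[R]_n -> 'cV[R]_l -> R) (x : R -> 'cV[R]_n)
  (e : R -> 'cV[R]_l) (c : R) dx de :
  differentiable (fun q : 'cV[R]_n * 'cV[R]_l => (H q.1 q.2 : R^o)) (x c, e c) ->
  is_derive (c : R^o) 1 x dx -> is_derive (c : R^o) 1 e de ->
  is_derive (c : R^o) 1 (fun r => (H (x r) (e r) : R^o))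
    ('d (fun y => (H y (e c) : R^o)) (x c) dx + 'd (fun z => (H (x c) z : R^o)) (e c) de).
Proof.
move=> dJ Dx De.
set J := (fun q : 'cV[R]_n * 'cV[R]_l => (H q.1 q.2 : R^o)).
have dx' : differentiable (x : R^o -> 'cV[R]_n) c by apply/derivable1_diffP; exact: ex_derive.
have de' : differentiable (e : R^o -> 'cV[R]_l) c by apply/derivable1_diffP; exact: ex_derive.
have dP : differentiable (fun r : R^o => (x r, e r)) c by exact: differentiable_pair.
have -> : (fun r => (H (x r) (e r) : R^o)) = J \o (fun r : R^o => (x r, e r)) by [].
have dJP : differentiable (J \o (fun r : R^o => (x r, e r))) c by exact: differentiable_comp.
apply: DeriveDef; first exact/derivable1_diffP.
rewrite deriveE // diff_comp // diff_pair //=.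
have -> : 'd (x : R^o -> 'cV[R]_n) (c : R^o) 1 = dx by rewrite -deriveE // derive_val.
have -> : 'd (e : R^o -> 'cV[R]_l) (c : R^o) 1 = de by rewrite -deriveE // derive_val.
have -> : (dx, de) = (dx, 0) + (0, de).
  by apply/pair_equal_spec; split; rewrite /= ?addr0 ?add0r.
rewrite linearD; congr (_ + _).
- have -> : (fun y => (H y (e c) : R^o)) = J \o (fun y : 'cV[R]_n => (id y, cst (e c) y)) by [].
  have dy : differentiable (fun y : 'cV[R]_n => (id y, cst (e c) y)) (x c).
    apply: differentiable_pair => //; exact: differentiable_cst.
  rewrite diff_comp // diff_pair //= ?diff_cst //.
  have -> : ('d (@id 'cV[R]_n) (x c) : _ -> _) = id by exact: diff_val.
  by [].
have -> : (fun z => (H (x c) z : R^o)) = J \o (fun z : 'cV[R]_l => (cst (x c) z, id z)) by [].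
have dz : differentiable (fun z : 'cV[R]_l => (cst (x c) z, id z)) (e c).
  apply: differentiable_pair => //; exact: differentiable_cst.
rewrite diff_comp // diff_pair //= ?diff_cst //.
have -> : ('d (@id 'cV[R]_l) (e c) : _ -> _) = id by exact: diff_val.
by [].
Qed.

Lemma lip_cont (V W : normedModType R) (A : set V) (h : V -> W) (phi : R -> V) (s : R) :
  (forall x, A x -> exists r : R, 0 < r /\ exists L : R,
    forall y z, A y -> A z -> `|y - x| < r -> `|z - x| < r ->
      `|h y - h z| <= L * `|y - z|) ->
  {for s, continuous phi} ->
  (exists2 d0 : R, 0 < d0 & forall r, `|r - s| < d0 -> A (phi r)) ->
  {for s, continuous (fun r => h (phi r))}.
Proof.
move=> Hl Hc [d0 d00 HA].
have As : A (phi s) by apply: HA; rewrite subrr normr0.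
have [r0 [r00 [L HL]]] := Hl _ As.
apply: eps_cont => eps he.
set L' := `|L| + 1.
have L'0 : 0 < L' by rewrite /L' ltr_pwDr.
have m0 : 0 < Order.min r0 (eps / L') by rewrite lt_min r00 divr_gt0.
have [d1 d10 Hd1] := @cont_eps _ _ _ Hc _ m0.
exists (Order.min d0 d1); first by rewrite lt_min d00 d10.
move=> r; rewrite lt_min => /andP [hr0 hr1].
have := Hd1 r hr1; rewrite lt_min => /andP [h1 h2].
apply: (le_lt_trans (HL _ _ (HA _ hr0) As h1 _)); first by rewrite subrr normr0.
apply: (le_lt_trans (y := L' * `|phi r - phi s|)).
  apply: ler_wpM2r => //; rewrite /L'; apply: (le_trans (ler_norm L)); rewrite lerDl //.
by rewrite -ltr_pdivlMl // mulrC.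
Qed.

Lemma cont_shift (V : normedModType R) (phi : R -> V) (s a : R) :
  {for (s + a), continuous phi} -> {for s, continuous (fun r : R => phi (r + a))}.
Proof.
move=> H; apply: eps_cont => eps he; have [d d0 Hd] := @cont_eps _ _ _ H _ he.
exists d => // r hr; apply: Hd; by rewrite opprD addrACA subrr addr0.
Qed.

Lemma cont_loc_eq (V : normedModType R) (phi psi : R -> V) (s : R) :
  (exists2 d : R, 0 < d & forall r, `|r - s| < d -> phi r = psi r) ->
  {for s, continuous phi} -> {for s, continuous psi}.
Proof.
move=> [e0 e00 He0] H; apply: eps_cont => eps he; have [d d0 Hd] := @cont_eps _ _ _ H _ he.
exists (Order.min e0 d); first by rewrite lt_min e00 d0.
move=> r; rewrite lt_min => /andP [h0 h1].
rewrite -(He0 r h0) -(He0 s); last by rewrite subrr normr0.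
exact: Hd.
Qed.

Lemma dist_pos (r t : R) : `|r - t| < t -> 0 < r.
Proof. rewrite ltr_norml => /andP [h1 h2]; lra. Qed.

Theorem theorem4
  (n m l : nat) (X : set 'cV[R]_n) (U : set 'cV[R]_m) (E Ecal : set 'cV[R]_l)
  (f : 'cV[R]_n -> 'cV[R]_n) (g : 'cV[R]_n -> 'M[R]_(n, m)) (tau : R)
  (Psi : R -> 'cV[R]_n -> (R -> 'cV[R]_m) -> 'cV[R]_n)
  (Gam : R -> 'cV[R]_l -> 'cV[R]_l) (dGam : R -> 'cV[R]_l -> 'cV[R]_l -> 'cV[R]_l)
  (H : 'cV[R]_n -> 'cV[R]_l -> R) (alpha : R -> R)
  (K : 'cV[R]_n -> 'cV[R]_l -> 'cV[R]_l -> 'cV[R]_m)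
  (x : R -> 'cV[R]_n) (u : R -> 'cV[R]_m) (e edot : R -> 'cV[R]_l)
  (* standing assumptions on the plant *)
  (HXopen : open X) (HXconn : connected X)
  (Hf : loc_lipschitz X f) (Hg : loc_lipschitz X g)
  (Htau : 0 < tau)
  (* environment prediction maps *)
  (HGam : forall (th : R) e0, 0 <= th <= tau -> E e0 -> E (Gam th e0))
  (HdGam : forall (th : R) e0 ed0, 0 <= th <= tau -> E e0 -> Ecal ed0 -> Ecal (dGam th e0 ed0))
  (* Psi is the (unique) semi-flow of the delayed dynamics *)
  (HPsi : forall x0 w, X x0 -> inB tau U w -> forall y : R -> 'cV[R]_n,
      pred_sol f g tau x0 w y <-> (forall th : R, 0 <= th <= tau -> y th = Psi th x0 w))
  (* H is C^1 and an ECBF with extended class K function alpha *)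
  (HC1 : C1_on X E H)
  (HECBF : ECBF X U E Ecal f g tau Psi Gam dGam H alpha)
  (* the controller *)
  (HKlip : loc_lipschitz [set p : 'cV[R]_n * 'cV[R]_l * 'cV[R]_l |
                            X p.1.1 /\ E p.1.2 /\ Ecal p.2]
                         (fun p => K p.1.1 p.1.2 p.2))
  (HKcond : forall x0 e0 ed0 w, Se X E H x0 e0 -> Ecal ed0 -> inB tau U w ->
      let xp := Psi tau x0 w in let ep := Gam tau e0 in let edp := dGam tau e0 ed0 in
      - alpha (H xp ep) <= Hdot f g H xp ep edp (K xp ep edp))
  (* the closed-loop trajectory: x solves xdot = f(x) + g(x) u(t - tau) on t >= 0 *)
  (Hx : forall t : R, 0 <= t ->
      X (x t) /\ RInt_vec (fun s => rhs f g (x s) (u (s - tau))) 0 t (x t - x 0))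
  (HuB : forall t : R, 0 <= t -> inB tau U (ushift u t))
  (Hu : forall t : R, 0 <= t ->
      u t = K (Psi tau (x t) (ushift u t)) (Gam tau (e t)) (dGam tau (e t) (edot t)))
  (* the environment *)
  (Hed : forall t : R, is_derive (t : R^o) 1 e (edot t))
  (Hedc : continuous edot)
  (HeE : forall t : R, 0 <= t -> E (e t) /\ Ecal (edot t))
  (Henv : forall t th : R, 0 <= t -> 0 <= th <= tau ->
      e (t + th) = Gam th (e t) /\ edot (t + th) = dGam th (e t) (edot t))
  (* Assumption 2 *)
  (Hass2 : forall th : R, 0 <= th <= tau ->
      Se X E H (Psi th (x 0) (ushift u 0)) (Gam th (e 0))) :
  Se X E H (x 0) (e 0) -> forall t : R, 0 <= t -> Se X E H (x t) (e t).

Proof.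
move=> Hs0.
have HSe : forall t, 0 <= t -> 0 <= H (x t) (e t) -> Se X E H (x t) (e t).
  move=> t ht hh; split; first exact: (Hx t ht).1.
  by split; [exact: (HeE t ht).1|exact: hh].
have HS : forall t th, 0 <= t -> 0 <= th <= tau -> x (t + th) = Psi th (x t) (ushift u t).
  move=> t th ht hth.
  have Xt := (Hx t ht).1.
  have P : pred_sol f g tau (x t) (ushift u t) (fun q => x (t + q)).
    move=> q /andP [q0 qtau] i.
    have htq : 0 <= t + q by rewrite addr_ge0.
    have [_ I1] := Hx (t + q) htq. have [_ I2] := Hx t ht.
    have [pr1 E1] := I1 i. have [pr2 E2] := I2 i.
    have [pr E3] := @sl_shift _ t q pr1 pr2 ltac:(by apply/RleP) ltac:(by apply/RleP).
    have EF : (fun p => rhs f g (x (t + p)) (ushift u t (p - tau)) i ord0) =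
              (fun p => (fun s => rhs f g (x s) (u (s - tau)) i ord0) (t + p)).
      by apply: funext => p; rewrite /ushift addrA.
    rewrite EF; exists pr; rewrite E3 E1 E2 !mxE.
    by rewrite RminusE; ring.
  exact: ((proj1 (HPsi _ _ Xt (HuB t ht) _)) P th hth).
have Hinit : forall s, 0 <= s <= tau -> 0 <= H (x s) (e s).
  move=> s hs; have := Hass2 s hs; rewrite /Se => -[_ [_ hh]].
  have := HS 0 s (lexx 0) hs; rewrite add0r => ->.
  have := (Henv 0 s (lexx 0) hs).1; rewrite add0r => ->.
  exact: hh.
have Hxint : forall i, forall r : R, Rle 0 r ->
    exists pr : Riemann_integrable (fun s => rhs f g (x s) (u (s - tau)) i ord0) 0 r,
      RiemannInt pr = x r i ord0 - x 0 i ord0.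
  move=> i r /RleP hr; have [pr Hpr] := (Hx r hr).2 i; exists pr; by rewrite Hpr !mxE.
have xcont : forall s, 0 < s -> {for s, continuous x}.
  move=> s hs; apply: mx_cont_of => i eps he.
  have [d [d0 Hd]] := @sl_cont _ (fun r => x r i ord0) s ltac:(by apply/RltP) (Hxint i) eps
     ltac:(by apply/RltP).
  exists d; first by apply/RltP.
  move=> r hr; apply/RltP; apply: Hd; by apply/RltP.
have econt : forall t, {for t, continuous e}.
  move=> t.
  have D : differentiable (e : R^o -> 'cV[R]_l) (t : R^o).
    have Dt := Hed t; apply/derivable1_diffP; exact: ex_derive.
  exact: (differentiable_continuous D).
have htt : 0 <= tau <= tau by rewrite lexx ltW.
have Hueq : forall t, 0 <= t -> u t = K (x (t + tau)) (e (t + tau)) (edot (t + tau)).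
  move=> t ht; rewrite Hu // -(HS t tau ht htt).
  by rewrite -(Henv t tau ht htt).1 -(Henv t tau ht htt).2.
have ucont : forall t, 0 < t -> {for t, continuous u}.
  move=> t ht.
  pose phi := fun r : R => ((x (r + tau), e (r + tau)), edot (r + tau)).
  have pc : {for t, continuous phi}.
    have c1 : {for t, continuous (fun r : R => x (r + tau))}.
      apply: cont_shift; apply: xcont; by rewrite addr_gt0.
    have c2 : {for t, continuous (fun r : R => e (r + tau))} by exact: cont_shift (econt _).
    have c3 : {for t, continuous (fun r : R => edot (r + tau))} by exact: cont_shift (Hedc _).
    exact: (cvg_pair (cvg_pair c1 c2) c3).
  have kc := @lip_cont _ _ _ _ phi t HKlip pc.
  apply: cont_loc_eq (kc _).
    exists t => // r hr; have r0 := dist_pos _ _ hr.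
    by rewrite Hueq ?ltW.
  exists t => // r hr; have r0 := dist_pos _ _ hr.
  have r1 : 0 <= r + tau by rewrite addr_ge0 ?ltW.
  split; [exact: (Hx _ r1).1|exact: (HeE _ r1)].
have fxcont : forall s, 0 < s -> {for s, continuous (fun r => f (x r))}.
  move=> s hs; apply: (@lip_cont _ _ _ _ x s Hf (xcont s hs)).
  exists s => // r hr; have r0 := dist_pos _ _ hr; exact: (Hx r (ltW r0)).1.
have gxcont : forall s, 0 < s -> {for s, continuous (fun r => g (x r))}.
  move=> s hs; apply: (@lip_cont _ _ _ _ x s Hg (xcont s hs)).
  exists s => // r hr; have r0 := dist_pos _ _ hr; exact: (Hx r (ltW r0)).1.
have Fcont : forall c, tau < c -> forall i,
    {for c, continuous (fun r : R => (rhs f g (x r) (u (r - tau)) i ord0 : R^o))}.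
  move=> c hc i.
  have c0 : 0 < c by exact: lt_trans Htau hc.
  have uc : {for c, continuous (fun r : R => u (r - tau))}.
    apply: cont_shift; apply: ucont; by rewrite subr_gt0.
  have -> : (fun r : R => (rhs f g (x r) (u (r - tau)) i ord0 : R^o)) =
      (fun r => (f (x r) i ord0 : R^o) + \sum_j (g (x r) i j : R^o) * u (r - tau) j ord0).
    by apply: funext => r; rewrite /rhs !mxE.
  have c1 := @mx_entry_cont _ _ _ c i ord0 (fxcont c c0).
  have c2 : {for c, continuous (fun r => \sum_j (g (x r) i j : R^o) * u (r - tau) j ord0)}.
    apply: cont_sum => j.
    exact: (continuousM (@mx_entry_cont _ _ _ c i j (gxcont c c0)) (@mx_entry_cont _ _ _ c j ord0 uc)).
  exact: (continuousD c1 c2).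
have xder : forall c, tau < c -> is_derive (c : R^o) 1 x (rhs f g (x c) (u (c - tau))).
  move=> c hc; apply: mx_deriv_of => i.
  have c0 : 0 < c by exact: lt_trans Htau hc.
  apply: (@sl_deriv _ (fun r => x r i ord0) c ltac:(by apply/RltP) (Hxint i)).
  move=> eps /RltP he; have [d d0 Hd] := @cont_eps _ _ _ (Fcont c hc i) _ he.
  exists d; split; first by apply/RltP.
  move=> r /RltP hr; apply/RltP; exact: Hd.
have [OO [Oopen [OXE [Odiff _]]]] := HC1.
have hder : forall c, tau < c -> is_derive (c : R^o) 1 (fun r => (H (x r) (e r) : R^o))
    (Hdot f g H (x c) (e c) (edot c) (u (c - tau))).
  move=> c hc; have c0 : 0 <= c by rewrite ltW // (lt_trans Htau hc).
  apply: (@chainH _ _ H x e c _ _ _ (xder c hc) (Hed c)).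
  apply: Odiff; apply: OXE; [exact: (Hx c c0).1 | exact: (HeE c c0).1].
have hineq : forall c, tau < c -> 0 <= H (x (c - tau)) (e (c - tau)) ->
    - alpha (H (x c) (e c)) <= Hdot f g H (x c) (e c) (edot c) (u (c - tau)).
  move=> c hc hh.
  have t0 : 0 <= c - tau by rewrite subr_ge0 ltW.
  have := HKcond _ _ _ _ (HSe _ t0 hh) (HeE _ t0).2 (HuB _ t0).
  cbv zeta.
  rewrite -Hu // -(HS _ tau t0 htt) -(Henv _ tau t0 htt).1 -(Henv _ tau t0 htt).2 subrK.
  by [].
have [a [b [a0 [b0 [al0 [_ almono]]]]]] := HECBF.1.
have hcont : forall s, 0 < s -> {for s, continuous (fun r => (H (x r) (e r) : R^o))}.
  move=> s hs.
  have dJ : differentiable (fun q : 'cV[R]_n * 'cV[R]_l => (H q.1 q.2 : R^o)) (x s, e s).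
    apply: Odiff; apply: OXE; [exact: (Hx s (ltW hs)).1|exact: (HeE s (ltW hs)).1].
  have pc : {for s, continuous (fun r => (x r, e r))}.
    exact: (cvg_pair (xcont s hs) (econt s)).
  have HC := @continuous_comp _ _ _ (fun r => (x r, e r)) (fun q : 'cV[R]_n * 'cV[R]_l => (H q.1 q.2 : R^o)) s pc (differentiable_continuous dJ).
  exact: HC.
pose h := fun r => H (x r) (e r).
have key : forall k : nat, forall s, 0 <= s <= k.+1%:R * tau -> 0 <= h s.
  elim=> [|k IH] s /andP [sge0 s1].
    by apply: Hinit; rewrite sge0 -(mul1r tau).
  have [hsk|hsk] := leP s (k.+1%:R * tau).
    by apply: IH; rewrite sge0 hsk.
  rewrite leNgt; apply/negP => hneg.
  set T := k.+1%:R * tau.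
  have Tpos : tau <= T.
    by rewrite /T ler_peMl ?ler1n // ltW.
  have T0 : 0 <= T by rewrite (le_trans (ltW Htau)).
  have hT : 0 <= h T by apply: IH; rewrite T0 lexx.
  pose S := [set r | T <= r <= s /\ 0 <= h r].
  have ST : S T by split => //; rewrite lexx ltW.
  have hsS : has_sup S.
    split; first by exists T.
    by exists s => r [/andP [_ ?] _].
  set s0 := sup S.
  have Ts0 : T <= s0 by exact: (sup_upper_bound hsS).
  have s0s : s0 <= s.
    apply: ge_sup; first by exists T.
    by move=> r [/andP [_ ?] _].
  have s0pos : 0 < s0 by apply: (lt_le_trans Htau); apply: (le_trans Tpos).
  have hs0 : 0 <= h s0.
    rewrite leNgt; apply/negP => hn.
    have hn' : 0 < - h s0 by rewrite oppr_gt0.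
    have [d d0 Hd] := @cont_eps _ _ _ (hcont s0 s0pos) _ hn'.
    have [r Sr Hr] := sup_adherent d0 hsS.
    have rs0 : r <= s0 by exact: (sup_upper_bound hsS).
    have [_ Sr2] := Sr.
    have : `|h r - h s0| < - h s0.
      apply: Hd; rewrite ler0_norm ?subr_le0 //; rewrite -/s0 in Hr. lra.
    rewrite ger0_norm; [lra|]. rewrite subr_ge0; lra.
  have hneg2 : forall r, s0 < r -> r <= s -> h r < 0.
    move=> r r1 r2; rewrite ltNge; apply/negP => hr.
    have : r <= s0.
      apply: (sup_upper_bound hsS); split => //; rewrite r2 andbT.
      apply: (le_trans Ts0); exact: ltW.
    by rewrite leNgt r1.
  have s0lt : s0 < s.
    rewrite lt_neqAle s0s andbT; apply/eqP => Es; move: hs0; rewrite Es; lra.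
  have [d2 d20 Hd2] := @cont_eps _ _ _ (hcont s0 s0pos) _ a0.
  set s2 := Order.min s (s0 + d2 / 2).
  have s02 : s0 < s2 by rewrite lt_min s0lt ltrDl divr_gt0.
  have s2s : s2 <= s by rewrite ge_min lexx.
  have s2d : s2 <= s0 + d2 / 2 by rewrite ge_min lexx orbT.
  have D1 : forall c, c \in `]s0, s2[ -> is_derive (c : R^o) 1 (h : R^o -> R^o) (Hdot f g H (x c) (e c) (edot c) (u (c - tau))).
    move=> c; rewrite in_itv /= => /andP [c1 c2]; apply: hder.
    apply: (le_lt_trans Tpos); apply: (le_lt_trans Ts0); exact: c1.
  have C1 : {within `[s0, s2], continuous h}.
    apply: continuous_in_subspaceT => r; rewrite inE /= in_itv /= => /andP [r1 r2].
    apply: hcont; exact: (lt_le_trans s0pos r1).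
  have [cc ccin Emvt] := MVT s02 D1 C1.
  move: ccin; rewrite in_itv /= => /andP [c1 c2].
  have ctau : tau < cc.
    apply: (le_lt_trans Tpos); apply: (le_lt_trans Ts0); exact: c1.
  have hcn : h cc < 0 by apply: hneg2 => //; exact: (ltW (lt_le_trans c2 s2s)).
  have hca : - a < h cc.
    have : `|h cc - h s0| < a.
      apply: Hd2; rewrite gtr0_norm ?subr_gt0 //.
      have : cc < s0 + d2 / 2 by exact: (lt_le_trans c2 s2d).
      lra.
    rewrite ltr_norml => /andP [q1 _]; lra.
  have hal : alpha (h cc) < 0.
    rewrite -al0; apply: almono => //.
      by rewrite hca (lt_trans hcn b0).
    by rewrite oppr_lt0 a0 b0.
  have hpast : 0 <= H (x (cc - tau)) (e (cc - tau)).
    apply: IH; apply/andP; split.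
      rewrite subr_ge0; apply: (le_trans Tpos); apply: (le_trans Ts0); exact: ltW.
    have : s <= k.+1%:R * tau + tau.
      by move: s1; rewrite -addn1 natrD mulrDl mul1r.
    have : cc <= s by exact: (ltW (lt_le_trans c2 s2s)).
    rewrite -/T; lra.
  have hin := hineq cc ctau hpast.
  have dpos : 0 < Hdot f g H (x cc) (e cc) (edot cc) (u (cc - tau)).
    rewrite /h /= in hal; lra.
  have : 0 < h s2 - h s0 by rewrite Emvt mulr_gt0 // subr_gt0.
  have : h s2 < 0 by apply: hneg2.
  lra.
move=> t ht.
have [k hk] : exists k : nat, t <= k.+1%:R * tau.
  exists (Num.truncn (t / tau)).
  rewrite -ler_pdivrMr //; exact: ltW (truncnS_gt _).
apply: HSe => //; apply: (key k); by rewrite ht hk.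
Qed.
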